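(* Over any alphabet with at least $4$ letters, for every odd integer $\ell\ge3$ there exists a palindrome of length $\ell$ whose critical exponent is exactly $\tfrac32$.
   Context: A word $x=x[1..n]$ has period $q$ if $x[i]=x[i+q]$ for $1\le i\le n-q$. For integers $p>q\ge1$, $x$ is a $(p/q)$-power if it has length $p$ and period $q$. The exponent $\exp(w)$ of a finite nonempty word $w$ is the largest rational $p/q$ such that $w$ is a $(p/q)$-power. The critical exponent of $w$ is the maximum of $\exp(w')$ over all nonempty factors $w'$ of $w$. A palindrome is a word equal to its reversal. *)

(* Defs.v *)
From mathcomp Require Import all_boot all_order all_algebra.
Set Implicit Arguments. Unset Strict Implicit. Unset Printing Implicit Defensive.
Import Order.TTheory GRing.Theory Num.Theory.

Definition has_period (A : eqType) (x : seq A) (q : nat) : Prop :=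
  forall (x0 : A) (i : nat), i + q < size x -> nth x0 x i = nth x0 x (i + q).

Definition is_power (A : eqType) (x : seq A) (p q : nat) : Prop :=
  (0 < q)%N /\ (q < p)%N /\ size x = p /\ has_period x q.

Definition factor (A : eqType) (u w : seq A) : Prop :=
  exists l r : seq A, w = l ++ u ++ r.

Definition is_exponent (A : eqType) (w : seq A) (r : rat) : Prop :=
  (exists p q, is_power w p q /\ r = (p%:R / q%:R)%R) /\
  (forall p q, is_power w p q -> (p%:R / q%:R <= r)%R).

Definition is_critical_exponent (A : eqType) (w : seq A) (r : rat) : Prop :=
  (exists u, factor u w /\ u != [::] /\ is_exponent u r) /\
  (forall u e, factor u w -> u != [::] -> is_exponent u e -> (e <= r)%R).

Definition palindrome (A : eqType) (w : seq A) : Prop := rev w = w.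

(* Main.v *)
Require Import Defs.
From mathcomp Require Import all_boot all_order all_algebra zify.
Import Order.TTheory GRing.Theory Num.Theory.
Set Implicit Arguments. Unset Strict Implicit.

Fixpoint runok (m cur : nat) (l : seq bool) : bool :=
  match l with
  | [::] => true
  | b :: l' => if b then (cur < m) && runok m cur.+1 l' else runok m 0 l'
  end.
Definition cmpl (w : seq nat) q := map (fun x : nat * nat => x.1 == x.2) (zip w (drop q w)).
Definition goodb (w : seq nat) :=
  all (fun q => runok (q %/ 2) 0 (cmpl w q)) (iota 1 (size w)).

Definition win m (s : seq bool) :=
  exists i, i + m.+1 <= size s /\ forall j, j <= m -> nth false s (i+j).

Lemma nseqS_cat (T : Type) n (x : T) l : nseq n x ++ x :: l = nseq n.+1 x ++ l.
Proof. by elim: n => //= n ->. Qed.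

Lemma runok_sound m cur l : cur <= m -> runok m cur l -> ~ win m (nseq cur true ++ l).
Proof.
elim: l cur => [|b l IH] cur Hc /=.
  move=> _ [i [Hi Hw]]. rewrite cats0 size_nseq in Hi. lia.
case: b.
  move=> /andP [Hlt Hr]. rewrite nseqS_cat. exact: IH.
move=> Hr [i [Hi Hw]].
rewrite size_cat size_nseq /= in Hi.
case: (leqP i cur) => Hic.
  have := Hw (cur - i) ltac:(lia).
  rewrite nth_cat size_nseq ltnNge.
  have -> : cur <= i + (cur - i) by lia.
  by rewrite /= (_ : i + (cur - i) - cur = 0) //; lia.
apply: (IH 0 (leq0n _) Hr). exists (i - cur.+1). split; first by rewrite /=; lia.
move=> j Hj. have := Hw j Hj. rewrite nth_cat size_nseq ltnNge.
have -> : cur <= i + j by lia.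
rewrite /= (_ : i + j - cur = (i - cur.+1 + j).+1) //. lia.
Qed.

Lemma runok_compl m cur l : cur <= m -> ~ win m (nseq cur true ++ l) -> runok m cur l.
Proof.
elim: l cur => [|b l IH] cur Hc Hnw //=.
case: b Hnw => Hnw.
  case: (ltnP cur m) => Hlt /=.
    apply: IH => //. by rewrite -nseqS_cat.
  exfalso; apply: Hnw. exists 0. rewrite size_cat size_nseq /=. split; first lia.
  move=> j Hj. rewrite nth_cat size_nseq. case: ltnP => Hj2.
    by rewrite nth_nseq Hj2.
  by rewrite (_ : 0 + j - cur = 0) //; lia.
apply: IH => // -[i [Hi Hw]]. apply: Hnw. exists (cur.+1 + i).
rewrite size_cat size_nseq /=. split; first by simpl in Hi; lia.
move=> j Hj. rewrite nth_cat size_nseq ltnNge (_ : cur <= cur.+1 + i + j) /=; last by lia.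
rewrite (_ : cur.+1 + i + j - cur = (i + j).+1) /=; last by lia.
exact: Hw.
Qed.

Definition bad (w : seq nat) := exists i q, 0 < q /\ i + (q + q %/ 2).+1 <= size w /\
  forall j, j <= q %/ 2 -> nth 0 w (i+j) = nth 0 w (i+j+q).

Lemma size_cmpl w q : size (cmpl w q) = size w - q.
Proof. rewrite size_map size_zip size_drop. apply/minn_idPr. exact: leq_subr. Qed.

Lemma nth_cmpl w q j : j < size w - q -> nth false (cmpl w q) j = (nth 0 w j == nth 0 w (j+q)).
Proof.
move=> Hj. rewrite (nth_map (0,0)); last by rewrite size_zip size_drop (minn_idPr (leq_subr _ _)).
rewrite nth_zip_cond size_zip size_drop ifT; last by rewrite (minn_idPr (leq_subr _ _)).
by rewrite /= nth_drop addnC.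
Qed.

Lemma goodbP w : goodb w <-> ~ bad w.
Proof.
split.
  move=> Hg [i [q [Hq [Hs Hm]]]].
  have Hin : q \in iota 1 (size w) by rewrite mem_iota; lia.
  have := allP Hg q Hin => Hr.
  apply: (runok_sound (leq0n _) Hr). exists i. rewrite /= size_cmpl. split; first lia.
  move=> j Hj. rewrite nth_cmpl; last by lia. by rewrite Hm.
move=> Hb. apply/allP => q. rewrite mem_iota => /andP [Hq1 _].
apply: runok_compl => // -[i [Hi Hw]]. apply: Hb. exists i, q.
rewrite /= size_cmpl in Hi. split=> //. split; first lia.
move=> j Hj. have := Hw j Hj. rewrite nth_cmpl; last by lia. by move/eqP.
Qed.

Definition h (x : nat) : seq nat :=
  match x with
  | 0 => [:: 0; 1; 2; 1; 3; 0; 3; 1; 2; 1; 0]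
  | 1 => [:: 1; 2; 0; 2; 3; 0; 3; 2; 0; 2; 1]
  | 2 => [:: 2; 3; 0; 1; 2; 0; 2; 1; 0; 3; 2]
  | _ => [:: 3; 0; 2; 0; 1; 2; 1; 0; 2; 0; 3]
  end.
Definition hw (w : seq nat) := flatten (map h w).

Lemma size_h x : size (h x) = 11.
Proof. by case: x => [|[|[|]]]. Qed.

Lemma hw_cat s t : hw (s ++ t) = hw s ++ hw t.
Proof. by rewrite /hw map_cat flatten_cat. Qed.

Lemma hw_cons x s : hw (x :: s) = h x ++ hw s.
Proof. by []. Qed.

Lemma size_hw w : size (hw w) = 11 * size w.
Proof. elim: w => [|x w IH] //=. by rewrite hw_cons size_cat size_h IH mulnS. Qed.

Lemma nth_hw_drop w c s : c <= size w -> nth 0 (hw w) (11 * c + s) = nth 0 (hw (drop c w)) s.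
Proof.
move=> Hc. rewrite -{1}(cat_take_drop c w) hw_cat nth_cat size_hw size_takel //.
rewrite ltnNge leq_addr /=. by rewrite addKn.
Qed.

Lemma nth_hw w i r : i < size w -> r < 11 -> nth 0 (hw w) (11 * i + r) = nth 0 (h (nth 0 w i)) r.
Proof.
move=> Hi Hr. rewrite nth_hw_drop ?(ltnW Hi) // (drop_nth 0 Hi) hw_cons nth_cat size_h.
by rewrite Hr.
Qed.

Lemma nth_hw2 w c s : c.+1 < size w -> s < 22 ->
  nth 0 (hw w) (11 * c + s) = nth 0 (h (nth 0 w c) ++ h (nth 0 w c.+1)) s.
Proof.
move=> Hc Hs. rewrite nth_hw_drop; last by lia.
rewrite (drop_nth 0 (ltnW Hc)) (drop_nth 0 Hc) !hw_cons catA nth_cat size_cat !size_h.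
by rewrite Hs.
Qed.

Definition syncb := all (fun x => all (fun y => all (fun z => all (fun r =>
   h x != take 11 (drop r (h y ++ h z))) (iota 1 10)) (iota 0 4)) (iota 0 4)) (iota 0 4).
Lemma syncb_true : syncb. Proof. by vm_compute. Qed.

Lemma first_inj x y : x < 4 -> y < 4 -> nth 0 (h x) 0 = nth 0 (h y) 0 -> x = y.
Proof. by case: x => [|[|[|[|]]]] //; case: y => [|[|[|[|]]]]. Qed.
Lemma last_inj x y : x < 4 -> y < 4 -> nth 0 (h x) 10 = nth 0 (h y) 10 -> x = y.
Proof. by case: x => [|[|[|[|]]]] //; case: y => [|[|[|[|]]]]. Qed.

Lemma h_lt4 x : all (fun y => y < 4) (h x).
Proof. by case: x => [|[|[|]]]. Qed.

Lemma hw_lt4 w : all (fun y => y < 4) (hw w).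
Proof. elim: w => [|x w IH] //. by rewrite hw_cons all_cat h_lt4 IH. Qed.

Fixpoint words n : seq (seq nat) :=
  match n with 0 => [:: [::]] | n'.+1 => [seq x :: v | x <- iota 0 4, v <- words n'] end.

Lemma words_complete v : all (fun y => y < 4) v -> v \in words (size v).
Proof.
elim: v => [|x v IH] //= /andP [Hx Hv].
have IH' := IH Hv.
by case: x Hx => [|[|[|[|x]]]] // _; rewrite !mem_cat (map_f _ IH') ?orbT.
Qed.

Lemma fincheck : all (fun v => ~~ goodb v || goodb (hw v)) (flatten [seq words n | n <- iota 0 8]).
Proof. vm_compute. reflexivity. Qed.

Lemma lt4_nth w k : all (fun y => y < 4) w -> k < size w -> nth 0 w k < 4.
Proof. move=> /allP H Hk. exact: H _ (mem_nth 0 Hk). Qed.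

Lemma fin_good v : size v <= 7 -> all (fun y => y < 4) v -> ~ bad v -> ~ bad (hw v).
Proof.
move=> Hs Ha Hb. apply/goodbP.
have Hin : v \in flatten [seq words n | n <- iota 0 8].
  apply/flatten_mapP. exists (size v); first by rewrite mem_iota; lia.
  exact: words_complete.
have := allP fincheck v Hin. by move/goodbP: Hb => ->.
Qed.

Lemma core w : all (fun y => y < 4) w -> ~ bad w -> ~ bad (hw w).
Proof.
move=> Hall Hgw [i0 [q [Hq [Hs Hm]]]].
rewrite size_hw in Hs.
case: (ltnP q 44) => Hq44.
-
  set b0 := i0 %/ 11.
  set n := (i0 + q + q %/ 2) %/ 11 - b0 + 1.
  set v := take n (drop b0 w).
  have Hbn : b0 + n <= size w by rewrite /n /b0; lia.
  have Hsv : size v = n by rewrite /v size_takel // size_drop; lia.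
  have Hnv : forall k, k < n -> nth 0 v k = nth 0 w (b0 + k).
    by move=> k Hk; rewrite /v nth_take // nth_drop.
  have Hav : all (fun y => y < 4) v.
    apply/allP => y Hy. apply: (allP Hall). exact: mem_drop (mem_take Hy).
  have Hbv : ~ bad v.
    move=> [i [q' [Hq' [Hs' Hm']]]]; apply: Hgw; exists (b0 + i), q'.
    rewrite Hsv in Hs'. split=> //. split; first lia.
    move=> j Hj. have := Hm' j Hj.
    have E1 := Hnv (i + j) ltac:(lia). have E2 := Hnv (i + j + q') ltac:(lia).
    by rewrite E1 E2 !addnA.
  have Hhv : forall k, k < 11 * n -> nth 0 (hw v) k = nth 0 (hw w) (11 * b0 + k).
    move=> k Hk. rewrite nth_hw_drop; last by lia.
    by rewrite -(cat_take_drop n (drop b0 w)) hw_cat nth_cat size_hw -/v Hsv Hk.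
  apply: (fin_good _ Hav Hbv); first by rewrite Hsv /n /b0; lia.
  exists (i0 - 11 * b0), q. split=> //. rewrite size_hw Hsv. split; first by rewrite /n /b0; lia.
  move=> j Hj. rewrite !Hhv; try (rewrite /n /b0; lia).
  have E1 : 11 * b0 + (i0 - 11 * b0 + j) = i0 + j by rewrite /b0; lia.
  have E2 : 11 * b0 + (i0 - 11 * b0 + j + q) = i0 + j + q by rewrite /b0; lia.
  rewrite E1 E2. exact: Hm.
-
  set b := (i0 + 10) %/ 11.
  have Hb1 : i0 <= 11 * b by rewrite /b; lia.
  have Hb2 : 11 * b <= i0 + 10 by rewrite /b; lia.
  have Hmat : forall t, t < 11 -> nth 0 (hw w) (11 * b + t) = nth 0 (hw w) (11 * b + t + q).
    move=> t Ht. have := Hm (11 * b + t - i0) ltac:(lia).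
    have E : i0 + (11 * b + t - i0) = 11 * b + t by lia.
    by rewrite E.
  set c := (11 * b + q) %/ 11.
  set r := (11 * b + q) %% 11.
  have Hcr : 11 * b + q = 11 * c + r by rewrite /c /r; lia.
  have Hr11 : r < 11 by rewrite /r; lia.
  have Hbw : b < size w by lia.
  have Hcw : c < size w by lia.
  have Hr0 : r = 0.
    case: (posnP r) => // Hr. exfalso.
    have Hc1 : c.+1 < size w by lia.
    have E : h (nth 0 w b) = take 11 (drop r (h (nth 0 w c) ++ h (nth 0 w c.+1))).
      apply: (@eq_from_nth _ 0).
        rewrite size_take size_drop size_cat !size_h. case: ltnP => //; lia.
      move=> t; rewrite size_h => Ht. rewrite nth_take // nth_drop -nth_hw2 //; last by lia.
      have E1 : 11 * c + (r + t) = 11 * b + t + q by lia.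
      by rewrite E1 -Hmat // nth_hw.
    have := syncb_true.
    move/allP/(_ (nth 0 w b)); rewrite mem_iota lt4_nth // => /(_ isT).
    move/allP/(_ (nth 0 w c)); rewrite mem_iota lt4_nth // => /(_ isT).
    move/allP/(_ (nth 0 w c.+1)); rewrite mem_iota lt4_nth // => /(_ isT).
    move/allP/(_ r); rewrite mem_iota => /(_ ltac:(lia)).
    by rewrite E eqxx.
  have Hq' : q = 11 * (c - b) by lia.
  set q' := c - b.
  set b0 := i0 %/ 11.
  set b1 := (i0 + q + q %/ 2) %/ 11.
  apply: Hgw. exists b0, q'. split; first lia. split; first by rewrite /b0; lia.
  move=> j Hj.
  have Hk : b0 + j + q' <= b1 by rewrite /b0 /b1; lia.
  have Hkw : b0 + j + q' < size w by rewrite /b1 in Hk; lia.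
  case: (leqP i0 (11 * (b0 + j))) => Hik.
    have := Hm (11 * (b0 + j) - i0) ltac:(rewrite /b1 in Hk; lia).
    have E1 : i0 + (11 * (b0 + j) - i0) = 11 * (b0 + j) + 0 by lia.
    have E2 : 11 * (b0 + j) + 0 + q = 11 * (b0 + j + q') + 0 by lia.
    rewrite E1 E2 !nth_hw //; try lia.
    apply: first_inj; apply: lt4_nth => //; lia.
  have := Hm (11 * (b0 + j) + 10 - i0) ltac:(rewrite /b0 in Hik *; lia).
  have E1 : i0 + (11 * (b0 + j) + 10 - i0) = 11 * (b0 + j) + 10 by rewrite /b0 in Hik *; lia.
  have E2 : 11 * (b0 + j) + 10 + q = 11 * (b0 + j + q') + 10 by lia.
  rewrite E1 E2 !nth_hw //; try lia.
  apply: last_inj; apply: lt4_nth => //; lia.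
Qed.

Definition Wn n := iter n hw [:: 0].

Lemma Wn_lt4 n : all (fun y => y < 4) (Wn n).
Proof. case: n => [|n] //=. exact: hw_lt4. Qed.

Lemma Wn_good n : ~ bad (Wn n).
Proof.
elim: n => [|n IH] /=.
  move=> [i [q [Hq [Hs _]]]]. simpl in Hs. lia.
apply: core => //. exact: Wn_lt4.
Qed.

Lemma size_Wn n : size (Wn n) = 11 ^ n.
Proof. elim: n => [|n IH] //=. by rewrite size_hw IH expnS. Qed.

Lemma rev_h x : rev (h x) = h x.
Proof. by case: x => [|[|[|]]]. Qed.

Lemma rev_hw w : rev (hw w) = hw (rev w).
Proof.
elim: w => [|x w IH] //. by rewrite hw_cons rev_cat IH rev_h rev_cons -cats1 hw_cat /= /hw /= cats0.
Qed.

Lemma Wn_pal n : rev (Wn n) = Wn n.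
Proof. elim: n => [|n IH] //=. by rewrite rev_hw IH. Qed.

Lemma odd11 n : odd (11 ^ n).
Proof. elim: n => [|n IH] //. by rewrite expnS oddM IH. Qed.

Lemma bad_sub w k n : k + n <= size w -> ~ bad w -> ~ bad (take n (drop k w)).
Proof.
move=> Hkn Hgw [i [q' [Hq' [Hs' Hm']]]]. apply: Hgw; exists (k + i), q'.
have Hsv : size (take n (drop k w)) = n by rewrite size_takel // size_drop; lia.
rewrite Hsv in Hs'. split=> //. split; first lia.
move=> j Hj. have := Hm' j Hj.
rewrite !nth_take; try lia. by rewrite !nth_drop !addnA.
Qed.

Lemma all_sub (P : pred nat) w k n : all P w -> all P (take n (drop k w)).
Proof. move=> H. apply/allP => y Hy. apply: (allP H). exact: mem_drop (mem_take Hy). Qed.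

Definition nobad (T : eqType) (w : seq T) := forall x0 i p q, 0 < q -> 3 * q < 2 * p ->
  i + p <= size w -> (forall j, j + q < p -> nth x0 w (i + j) = nth x0 w (i + j + q)) -> False.

Lemma nthc (T : Type) (x0 : T) (l u r : seq T) j : j < size u ->
  nth x0 (l ++ u ++ r) (size l + j) = nth x0 u j.
Proof. move=> Hj. by rewrite nth_cat ltnNge leq_addr /= addKn nth_cat Hj. Qed.

Lemma bound (T : eqType) (w u : seq T) p q : nobad w -> factor u w -> is_power u p q ->
  (p%:R / q%:R <= 3%:R / 2%:R :> rat)%R.
Proof.
move=> Hnb [l [r Ew]] [Hq [Hqp [Hsu Hper]]]; subst w.
have H2 : 2 * p <= 3 * q.
  rewrite leqNgt; apply/negP => Hlt.
  have [x0 _] : exists x0 : T, True by case: u Hsu Hper {Hnb} => [|x0 u'] Hsu; [simpl in Hsu; lia | exists x0].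
  apply: (Hnb x0 (size l) p q Hq Hlt); first by rewrite !size_cat /= Hsu; lia.
  move=> j Hj. rewrite -addnA !nthc; try lia.
  apply: Hper. rewrite Hsu; lia.
have Hq0 : (0 < q%:R :> rat)%R by rewrite ltr0n.
rewrite ler_pdivrMr // mulrAC ler_pdivlMr ?ltr0n // -!natrM ler_nat. lia.
Qed.

Lemma crit (T : eqType) (w : seq T) a b k : nobad w ->
  w = take k w ++ [:: a; b; a] ++ drop k.+3 w ->
  is_critical_exponent w (3%:R / 2%:R)%R.
Proof.
move=> Hnb Hw. split.
  exists [:: a; b; a]. split; first by exists (take k w), (drop k.+3 w).
  split=> //. split.
    exists 3, 2. split=> //. split=> //. split=> //. split=> //.
    rewrite /has_period; move=> x0 [|[|i]] //=; rewrite !addnS ltnS; lia.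
  move=> p q Hpq. apply: (bound Hnb _ Hpq). by exists (take k w), (drop k.+3 w).
move=> u e Hf _ [[p [q [Hpq ->]]] _]. exact: (bound Hnb Hf Hpq).
Qed.

Lemma split3 (T : Type) (x0 : T) (s : seq T) i : i.+2 < size s ->
  s = take i s ++ [:: nth x0 s i; nth x0 s i.+1; nth x0 s i.+2] ++ drop i.+3 s.
Proof.
move=> Hi. rewrite -{1}(cat_take_drop i s). congr (_ ++ _).
rewrite (drop_nth x0) ?(drop_nth x0 (n := i.+1)) ?(drop_nth x0 (n := i.+2)) //; lia.
Qed.

Theorem mainTheorem7 (A : finType) (hA : (4 <= #|A|)%N) (l : nat)
  (hl : (3 <= l)%N) (hodd : odd l) :
  exists w : seq A, size w = l /\ palindrome w /\
    is_critical_exponent w (3%:R / 2%:R)%R.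
Proof.
have /card_gt0P [a0 _] : 0 < #|A| by lia.
set g := fun n => nth a0 (enum A) n.
have ginj : forall x y, x < 4 -> y < 4 -> g x = g y -> x = y.
  move=> x y Hx Hy /eqP. rewrite /g nth_uniq.
  - by move/eqP.
  - apply: (leq_trans Hx); rewrite -cardE; exact: hA.
  - apply: (leq_trans Hy); rewrite -cardE; exact: hA.
  - exact: enum_uniq.
set N := 11 ^ l.
set W := Wn l.
have HN : l < N by exact: ltn_expl.
have HNo : N %% 2 = 1 by rewrite modn2 odd11.
have Hlo : l %% 2 = 1 by rewrite modn2 hodd.
set k := (N - l) %/ 2.
have Hk : N = k + k + l by rewrite /k; lia.
set w' := take l (drop k W).
have HsW : size W = N by rewrite size_Wn.
have Hsw' : size w' = l by rewrite /w' size_takel // size_drop; lia.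
have Hnw' : forall i, i < l -> nth 0 w' i = nth 0 W (k + i).
  by move=> i Hi; rewrite /w' nth_take // nth_drop.
have Hpal' : rev w' = w'.
  apply: (@eq_from_nth _ 0); first by rewrite size_rev.
  move=> i; rewrite size_rev Hsw' => Hi. rewrite nth_rev Hsw' // !Hnw'; try lia.
  have HpW : rev W = W := Wn_pal l.
  rewrite -{2}HpW nth_rev HsW; last by lia.
  congr nth. lia.
have Hgood' : ~ bad w' by apply: bad_sub; [lia | exact: Wn_good].
have Hlt' : all (fun y => y < 4) w' by apply: all_sub; exact: Wn_lt4.
exists (map g w'). split; first by rewrite size_map.
split; first by rewrite /palindrome -map_rev Hpal'.
set m := l %/ 2.
have Hm : l = m + m + 1 by rewrite /m; lia.
have Hnob : nobad (map g w').
  move=> x0 i p q Hq Hlt Hs Hm'. apply: Hgood'. exists i, q. rewrite size_map in Hs.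
  split=> //. split; first lia.
  move=> j Hj. have := Hm' j ltac:(lia).
  rewrite !(nth_map 0); try lia.
  apply: ginj; apply: lt4_nth => //; lia.
apply: (crit (k := m.-1) Hnob).
have E := split3 a0 (s := map g w') (i := m.-1) ltac:(rewrite size_map; lia).
rewrite {1}E. congr (_ ++ (_ :: _ :: _ :: _)).
rewrite -{1}Hpal' map_rev nth_rev size_map Hsw'; last by lia.
congr nth. lia.
Qed.
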